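(* Let $D\subseteq\Phi^+$ be a rook placement. Then the subspace $\mathfrak{p}\subseteq\mathfrak{n}$ spanned by the $e_{j,i}$, $(i,j)\in\Phi^+\setminus\mathcal{M}$, is a Lie subalgebra of $\mathfrak{n}$.
   Context: Let $n\ge1$ and let $\mathfrak{n}$ be the Lie algebra of strictly upper-triangular complex $n\times n$ matrices; $e_{i,j}$ denotes the elementary matrix with $1$ at position $(i,j)$. Let $\Phi^+=\{(i,j)\in\mathbb{Z}^2:1\le j<i\le n\}$, with rows $\mathcal{R}_k=\{(k,s)\in\Phi^+\}$ and columns $\mathcal{C}_k=\{(r,k)\in\Phi^+\}$. A rook placement is a subset $D\subseteq\Phi^+$ with $|D\cap\mathcal{R}_k|\le 1$ and $|D\cap\mathcal{C}_k|\le1$ for all $k$. Write $D=\{(i_1,j_1),\dots,(i_s,j_s)\}$ with $j_1<\dots<j_s$. Set $\mathcal{M}_{j_0}=\emptyset$ and, recursively for $r=1,\dots,s$, $\mathcal{M}_{j_r}=\{(i_r,q)\in\Phi^+:\ j_r<q<i_r,\ (q,j_r)\notin\bigcup_{l=0}^{r-1}\mathcal{M}_{j_l}\}$, and $\mathcal{M}=\bigcup_{r=1}^s\mathcal{M}_{j_r}$. *)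

(* Defs.v *)
From HB Require Import structures.
From mathcomp Require Import all_boot all_order all_algebra.
Set Implicit Arguments. Unset Strict Implicit. Unset Printing Implicit Defensive.
Import GRing.Theory.

(* Indices are 0-based: 'I_n = {0,...,n-1} stands for {1,...,n}. *)

Definition Phi (n : nat) : {set 'I_n * 'I_n} := [set p : 'I_n * 'I_n | (p.2 : nat) < p.1].

Definition rook_placement (n : nat) (D : {set 'I_n * 'I_n}) : bool :=
  [&& D \subset Phi n,
      [forall k : 'I_n, #|[set p in D | p.1 == k]| <= 1]
    & [forall k : 'I_n, #|[set p in D | p.2 == k]| <= 1]].

(* M_{j} for the column j = k (as a nat) of a root (i_r, j_r) of D, given the
   union S of the previously built M_{j_l} (those with j_l < j_r):
   { (i_r, q) : j_r < q < i_r, (q, j_r) \notin S }. *)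
Definition Mcol (n : nat) (D S : {set 'I_n * 'I_n}) (k : nat)
  : {set 'I_n * 'I_n} :=
  [set p : 'I_n * 'I_n | [exists j : 'I_n,
     [&& nat_of_ord j == k, (p.1, j) \in D, j < p.2, p.2 < p.1
       & (p.2, j) \notin S]]].

Fixpoint Mupto (n : nat) (D : {set 'I_n * 'I_n}) (k : nat)
  : {set 'I_n * 'I_n} :=
  match k with
  | 0 => set0
  | k'.+1 => Mupto D k' :|: Mcol D (Mupto D k') k'
  end.

Definition Mset (n : nat) (D : {set 'I_n * 'I_n}) : {set 'I_n * 'I_n} :=
  Mupto D n.

Definition pspace (F : fieldType) (n : nat) (D : {set 'I_n * 'I_n})
  : {vspace 'M[F]_(n, n)} :=
  (<< [seq (delta_mx p.2 p.1 : 'M[F]_(n, n)) | p <- enum (Phi n :\: Mset D)%SET] >>)%VS.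

(* Main.v *)
Require Import Defs.
From HB Require Import structures.
From mathcomp Require Import all_boot all_order all_algebra.
From mathcomp Require Import zify.

Section C.
Variables (n : nat) (D : {set 'I_n * 'I_n}).

Lemma MuptoE k (p : 'I_n * 'I_n) : (p \in Mupto D k) =
  [exists j : 'I_n, [&& (j < k)%N, (p.1,j) \in D, (j < p.2)%N, (p.2 < p.1)%N
     & (p.2,j) \notin Mupto D j]].
Proof.
elim: k => [|k IH] /=.
  by rewrite in_set0; apply/esym/existsP => -[j].
rewrite in_setU IH in_set; apply/idP/idP.
- case/orP => /existsP [j /and5P [H1 H2 H3 H4 H5]]; apply/existsP; exists j.
    by rewrite H2 H3 H4 H5 ltnS ltnW.
  by move/eqP: H1 => H1; rewrite -H1 in H5; rewrite H2 H3 H4 H5 H1 ltnSn.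
- case/existsP => j /and5P [H1 H2 H3 H4 H5].
  rewrite ltnS leq_eqVlt in H1; case/orP: H1 => H1.
    apply/orP; right; apply/existsP; exists j.
    by move/eqP: (H1) => H1'; rewrite H1 H2 H3 H4 -H1'.
  by apply/orP; left; apply/existsP; exists j; rewrite H1 H2 H3 H4 H5.
Qed.

Lemma Mupto_stable (q : 'I_n * 'I_n) k k' : (q.2 <= k)%N -> (q.2 <= k')%N ->
  (q \in Mupto D k) = (q \in Mupto D k').
Proof.
move=> Hk Hk'; rewrite !MuptoE; apply: eq_existsb => j.
case: (ltnP j q.2) => Hj.
  by rewrite (leq_trans Hj Hk) (leq_trans Hj Hk').
by rewrite !andbF.
Qed.

Lemma MsetE (p : 'I_n * 'I_n) : (p \in Mset D) =
  [exists j : 'I_n, [&& (p.1,j) \in D, (j < p.2)%N, (p.2 < p.1)%N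
     & (p.2,j) \notin Mset D]].
Proof.
rewrite /Mset MuptoE; apply: eq_existsb => j.
rewrite ltn_ord /= (@Mupto_stable (p.2, j) j n) //.
exact: ltnW (ltn_ord j).
Qed.

Lemma keyM m (a b d : 'I_n) : (a <= m)%N -> (a < b)%N -> (b < d)%N ->
  (d, a) \in Mset D -> ((b, a) \in Mset D) || ((d, b) \in Mset D).
Proof.
elim: m a b d => [|m IH] a b d Ham Hab Hbd.
  rewrite MsetE => /existsP [c /and4P [_ Hc _ _]] /=; simpl in Hc; lia.
rewrite MsetE => /existsP [c /and4P [Hdc Hca Had Hac]]; simpl in *.
case Hdb: ((d, b) \in Mset D); first by rewrite orbT.
have Hbc : (b, c) \in Mset D.
  apply: contraFT Hdb => Hn; rewrite MsetE; apply/existsP; exists c.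
  rewrite /= Hdc Hn Hbd andbT /=; lia.
move: Hbc; rewrite MsetE => /existsP [j /and4P [Hbj Hjc Hcb Hcj]]; simpl in *.
rewrite orbF MsetE; apply/existsP; exists j.
rewrite /= Hbj Hab (ltn_trans Hjc Hca) /=.
apply/negP => Haj.
have := IH j c a ltac:(lia) Hjc Hca Haj.
by rewrite (negbTE Hcj) (negbTE Hac).
Qed.
End C.
Import GRing.Theory.


Section L.
Local Open Scope ring_scope.
Variables (F : fieldType) (n : nat) (D : {set 'I_n * 'I_n}).
Let S := (Phi n :\: Mset D)%SET.
Let s := [seq (delta_mx p.2 p.1 : 'M[F]_(n, n)) | p <- enum S].

Lemma sum_neq0 (I : finType) (f : I -> F) : \sum_i f i != 0 -> exists i, f i != 0.
Proof.
move=> H; apply/existsP; apply: contraR H; rewrite negb_exists => /forallP H.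
by apply/eqP; apply: big1 => i _; apply/eqP; move: (H i); rewrite negbK.
Qed.

Lemma pspace_entry (A : 'M[F]_(n, n)) i j : A \in pspace F D -> A i j != 0 -> (j, i) \in S.
Proof.
rewrite /pspace -/S -/s => HA.
have := coord_span (X := in_tuple s) HA => ->.
rewrite summxE => /sum_neq0 [k]; rewrite !mxE.
have Hk : (k < size s)%N by exact: ltn_ord k.
have := mem_nth 0 Hk => /mapP [p Hp ->].
rewrite mxE mulf_eq0 negb_or => /andP [_].
case: andP => [[/eqP -> /eqP ->] _ | _]; last by rewrite eqxx.
by rewrite -mem_enum; case: p Hp.
Qed.

Lemma pspace_from (A : 'M[F]_(n, n)) : (forall i j, A i j != 0 -> (j, i) \in S) -> A \in pspace F D.
Proof.
move=> H; rewrite (matrix_sum_delta A).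
apply: memv_suml => i _; apply: memv_suml => j _.
have [->|Hij] := eqVneq (A i j) 0; first by rewrite scale0r mem0v.
apply: memvZ; apply: memv_span; apply/mapP; exists (j, i) => //.
by rewrite mem_enum; exact: H.
Qed.
End L.

Lemma prod_mem (F : fieldType) (n : nat) (D : {set 'I_n * 'I_n})
  (X Y : 'M[F]_(n, n)) i k j : X \in pspace F D -> Y \in pspace F D ->
  (X i k * Y k j != 0)%R -> (j, i) \in (Phi n :\: Mset D)%SET.
Proof.
move=> HX HY; rewrite mulf_eq0 negb_or => /andP [H1 H2].
have := @pspace_entry F n D X i k HX H1; have := @pspace_entry F n D Y k j HY H2.
rewrite !inE /= => /andP [Hjk Hkj] /andP [Hki Hik].
rewrite (ltn_trans Hik Hkj) andbT.
apply/negP => Hji.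
have := @keyM n D i i k j (leqnn i) Hik Hkj Hji.
by rewrite (negbTE Hki) (negbTE Hjk).
Qed.

Theorem proposition2p6 (F : fieldType) (n : nat) (D : {set 'I_n * 'I_n}) :
  0 < n -> rook_placement D ->
  forall A B : 'M[F]_(n, n), A \in pspace F D -> B \in pspace F D ->
    (A *m B - B *m A)%R \in pspace F D.
Proof.
move=> _ _ A B HA HB; apply: pspace_from => i j.
rewrite !mxE.
have [H1|H1] := eqVneq (\sum_k A i k * B k j)%R 0%R.
  rewrite H1 sub0r oppr_eq0 => /(@sum_neq0 F) [k].
  exact: prod_mem.
by move=> _; have [k] := @sum_neq0 F _ _ H1; exact: prod_mem.
Qed.
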